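(* Let $I$ be a monoid with identity $1$ and let $\mathrm{Inv}=\mathrm{Map}^l_I\circ\mathrm{Map}^r_I$, restricted to the category $\mathrm{bAct}(I)$ of finite $I$-sets. For $M$ in $\mathrm{bAct}(I)$ let $\overline{\mathrm{ev}}_M:\mathrm{Inv}(M)\to M$, $f\mapsto f(1)(1)$. Then the maps $\overline{\mathrm{ev}}_{\mathrm{Inv}(M)}:\mathrm{Inv}(\mathrm{Inv}(M))\to\mathrm{Inv}(M)$ define a natural isomorphism $\mathrm{Inv}\circ\mathrm{Inv}\Rightarrow\mathrm{Inv}$.
   Context: Let $I$ be a monoid with operation $\otimes$. For a set $X$, $\mathrm{End}_l(X)$ denotes self-maps written on the left with product $f\circ g$ ($g$ first); $\mathrm{End}_r(X)$ denotes self-maps written on the right, $x\mapsto(x)f$, with $(x)(fg)=((x)f)g$. An $I$-set is a set $X$ with a pair $\xi=(\xi_l,\xi_r)$ of monoid homomorphisms $\xi_l:I\to\mathrm{End}_l(X)$, $\xi_r:I\to\mathrm{End}_r(X)$ with $(\xi_l(i)(x))\xi_r(j)=\xi_l(i)((x)\xi_r(j))$; $f:(X,\xi)\to(Y,\eta)$ is $I$-equivariant if $(f(\xi_l(i)(x)))\eta_r(i)=\eta_l(i)(f((x)\xi_r(i)))$ for all $i,x$. An $I$-set is invertible on one side if either $\xi_l(i)$ is bijective for all $i$ or $\xi_r(i)$ is bijective for all $i$; $\mathrm{bAct}(I)$ is the category of finite $I$-sets that are products (componentwise action) of $I$-sets invertible on one side, with $I$-equivariant maps. For an $I$-set $(A,\alpha)$: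 $\mathrm{Map}^l_I(A)$ is the set of $f:I\to A$ with $(f(j))\alpha_r(i)=\alpha_l(i)(f(j\otimes i))$ for all $i,j$, with action $\theta_l(k)=\mathrm{id}$, $((f)\theta_r(k))(j)=f(k\otimes j)$; $\mathrm{Map}^r_I(A)$ is the set of $f:I\to A$ with $(f(i\otimes j))\alpha_r(i)=\alpha_l(i)(f(j))$ for all $i,j$, with action $(\vartheta_l(k)(f))(i)=f(i\otimes k)$, $\vartheta_r(k)=\mathrm{id}$. Both are functors via $u\mapsto(h\mapsto u\circ h)$. *)

(* Defs.v *)
From mathcomp Require Import all_boot.
From mathcomp Require Import monoid.
From Stdlib Require List.

Set Implicit Arguments.
Unset Strict Implicit.
Unset Printing Implicit Defensive.

Local Open Scope group_scope.

Section ISets.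
Variable I : monoidType.

(* Raw data of an I-set: a set X with left-written endomaps [actl i]
   (xi_l(i)) and right-written endomaps [actr i], where [actr i x]
   stands for (x)xi_r(i). *)
Record iset := ISet {
  carrier :> Type;
  actl : I -> carrier -> carrier;
  actr : I -> carrier -> carrier }.

Definition is_iset (X : iset) : Prop :=
  [/\ forall x : X, actl 1 x = x,
      forall i j (x : X), actl (i * j) x = actl i (actl j x),
      forall x : X, actr 1 x = x,
      forall i j (x : X), actr (i * j) x = actr j (actr i x)
    & forall i j (x : X), actr j (actl i x) = actl i (actr j x)].

Definition equivariant (X Y : iset) (f : X -> Y) : Prop :=
  forall i (x : X), actr i (f (actl i x)) = actl i (f (actr i x)).

Definition iset_iso (X Y : iset) (f : X -> Y) : Prop :=
  equivariant f /\
  exists g : Y -> X, [/\ equivariant g, cancel f g & cancel g f].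

Definition one_side_invertible (X : iset) : Prop :=
  (forall i, bijective (@actl X i)) \/ (forall i, bijective (@actr X i)).

Definition prod_iset (K : Type) (N : K -> iset) : iset :=
  @ISet (forall k, N k)
        (fun i x k => actl i (x k))
        (fun i x k => actr i (x k)).

Definition finite_set (X : Type) : Prop :=
  exists s : list X, forall x, List.In x s.

Definition bAct (M : iset) : Prop :=
  [/\ is_iset M, finite_set M &
      exists (K : Type) (N : K -> iset),
        (forall k, is_iset (N k) /\ one_side_invertible (N k)) /\
        M = prod_iset N].

Definition mapr_cond (A : iset) (f : I -> A) : Prop :=
  forall i j, actr i (f (i * j)) = actl i (f j).

Lemma mapr_closed (A : iset) (k : I) (f : {f : I -> A | mapr_cond f}) :
  mapr_cond (fun i => proj1_sig f (i * k)).
Proof. by case: f => f Hf i j /=; rewrite -mulgA Hf. Qed.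

Definition Mapr (A : iset) : iset :=
  @ISet {f : I -> A | mapr_cond f}
        (fun k f => exist _ (fun i => proj1_sig f (i * k)) (mapr_closed k f))
        (fun _ f => f).

Definition mapl_cond (A : iset) (f : I -> A) : Prop :=
  forall i j, actr i (f j) = actl i (f (j * i)).

Lemma mapl_closed (A : iset) (k : I) (f : {f : I -> A | mapl_cond f}) :
  mapl_cond (fun j => proj1_sig f (k * j)).
Proof. by case: f => f Hf i j /=; rewrite Hf mulgA. Qed.

Definition Mapl (A : iset) : iset :=
  @ISet {f : I -> A | mapl_cond f}
        (fun _ f => f)
        (fun k f => exist _ (fun j => proj1_sig f (k * j)) (mapl_closed k f)).

Definition Inv (A : iset) : iset := Mapl (Mapr A).

Definition evbar (A : iset) (f : Inv A) : A :=
  proj1_sig (proj1_sig f 1) 1.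

End ISets.

(* Main.v *)
Require Import Defs.
From mathcomp Require Import all_boot.
From mathcomp Require Import monoid.
From Stdlib Require List.
From Stdlib Require Import ClassicalEpsilon ProofIrrelevance FunctionalExtensionality.

Set Implicit Arguments.
Unset Strict Implicit.
Unset Printing Implicit Defensive.
Local Open Scope group_scope.


Lemma fin_perm (X : Type) (s : list X) (Hs : forall x, List.In x s)
  (E : X -> Prop) (f : X -> X)
  (H : forall v, E v -> exists u, E u /\ f u = v) :
  (forall u, E u -> E (f u)) /\ (forall u v, E u -> E v -> f u = f v -> u = v).
Proof.
pose g v := match excluded_middle_informative (E v) with
            | left e => proj1_sig (constructive_indefinite_description _ (H v e))
            | right _ => v end.
have Hg : forall v, E v -> E (g v) /\ f (g v) = v.
  move=> v Ev; rewrite /g; case: excluded_middle_informative => [e|//].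
  by case: constructive_indefinite_description.
pose dec := fun x y : X => excluded_middle_informative (x = y).
pose l := List.nodup dec (List.filter (fun x => if excluded_middle_informative (E x) then true else false) s).
have Hl : forall x, List.In x l <-> E x.
  move=> x; rewrite /l List.nodup_In List.filter_In.
  case: excluded_middle_informative => Ex; split.
  - by case.
  - by move=> _; split.
  - by case.
  - by [].
have ND : List.NoDup l by apply: List.NoDup_nodup.
have ND' : List.NoDup (List.map g l).
  apply: List.NoDup_map_NoDup_ForallPairs => //.
  move=> a b /Hl Ea /Hl Eb Hab.
  by rewrite -(proj2 (Hg _ Ea)) -(proj2 (Hg _ Eb)) Hab.
have Inc : List.incl l (List.map g l).
  apply: List.NoDup_length_incl => //.
    by rewrite List.length_map; apply: le_n.
  move=> y /List.in_map_iff [x [<- /Hl Ex]]; apply/Hl; exact: (proj1 (Hg _ Ex)).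
have Pre : forall u, E u -> exists v, E v /\ u = g v.
  move=> u /Hl /Inc /List.in_map_iff [v [<- /Hl Ev]]; by exists v.
split.
  move=> u /Pre [v [Ev ->]]; by rewrite (proj2 (Hg _ Ev)).
move=> u v /Pre [a [Ea ->]] /Pre [b [Eb ->]].
by rewrite (proj2 (Hg _ Ea)) (proj2 (Hg _ Eb)) => ->.
Qed.



Definition thr (I : monoidType) (X : Type) (op : I -> I -> I) (f : I -> X -> X)
  (m : I -> X) := forall z i, m z = f i (m (op i z)).
Definition Eth (I : monoidType) (X : Type) (op : I -> I -> I) (f : I -> X -> X)
  (v : X) := exists m, thr op f m /\ m 1 = v.

Lemma Eth_pre (I : monoidType) (X : Type) (op : I -> I -> I) (f : I -> X -> X)
  (opA : forall a b c, op a (op b c) = op (op a b) c)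
  (op1 : forall a, op 1 a = a) (opr1 : forall a, op a 1 = a) i v :
  Eth op f v -> exists u, Eth op f u /\ f i u = v.
Proof.
move=> [m [Hm <-]]; exists (m (op i 1)); split; last by rewrite -(Hm 1 i).
exists (fun z => m (op z i)); split; last by rewrite op1 opr1.
by move=> z w /=; rewrite (Hm (op z i) w) opA.
Qed.

Lemma Eth_fin (I : monoidType) (X : Type) (s : list X) (Hs : forall x, List.In x s)
  (op : I -> I -> I) (f : I -> X -> X)
  (opA : forall a b c, op a (op b c) = op (op a b) c)
  (op1 : forall a, op 1 a = a) (opr1 : forall a, op a 1 = a) i :
  (forall u, Eth op f u -> Eth op f (f i u)) /\
  (forall u v, Eth op f u -> Eth op f v -> f i u = f i v -> u = v).
Proof.
apply: (@fin_perm X s Hs) => v; exact: (Eth_pre opA op1 opr1).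
Qed.

Definition InvR (I : monoidType) (X : Type) (l r : I -> X -> X) (h : I -> I -> X) :=
  (forall y z i, h y z = h (y * i) (z * i)) /\
  (forall y z i, r i (h y (i * z)) = l i (h y z)).

Definition Inv2R (I : monoidType) (X : Type) (l r : I -> X -> X)
  (G : I -> I -> I -> I -> X) :=
  [/\ forall j x y z i, G j x y z = G (j * i) (x * i) y z,
      forall j x y z i, G j x y z = G j (i * x) (i * y) z
    & forall j x, InvR l r (G j x)].

Lemma G_diag (I : monoidType) (X : Type) (l r : I -> X -> X) G :
  Inv2R l r G -> forall j x, G j x 1 1 = G 1 1 j x.
Proof.
move=> [Ha Hb H3] j x.
have e1 := proj1 (H3 j x) 1 1 x. rewrite !mul1g in e1.
have e2 := Hb j 1 1 x x. rewrite !mulg1 in e2.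
have e3 := Hb j 1 1 x j. rewrite !mulg1 in e3.
have e4 := Ha 1 1 j x j. rewrite !mul1g in e4.
by rewrite e1 -e2 e3 e4.
Qed.



Lemma caseL (I : monoidType) (X : Type) (s : list X) (Hs : forall x, List.In x s)
  (l r mu : I -> X -> X)
  (lM : forall i j v, l (i * j) v = l i (l j v))
  (rM : forall i j v, r (i * j) v = r j (r i v))
  (lr : forall i j v, r j (l i v) = l i (r j v))
  (mu1 : forall i, cancel (l i) (mu i)) (mu2 : forall i, cancel (mu i) (l i)) :
  (forall G G', Inv2R l r G -> Inv2R l r G' ->
     (forall y z, G 1 1 y z = G' 1 1 y z) ->
     forall j x y z, G j x y z = G' j x y z) /\
  (forall h, InvR l r h -> exists G, Inv2R l r G /\ forall y z, G 1 1 y z = h y z).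
Proof.
pose sg i v := mu i (r i v).
have muM : forall i j v, mu (i * j) v = mu j (mu i v).
  move=> i j v; apply: (can_inj (mu1 (i * j))).
  by rewrite mu2 lM mu2 mu2.
have mur : forall i j v, mu i (r j v) = r j (mu i v).
  move=> i j v; apply: (can_inj (mu1 i)); by rewrite mu2 -lr mu2.
have sgM : forall i j v, sg (i * j) v = sg j (sg i v).
  by move=> i j v; rewrite /sg muM rM mur.
have opA : forall a b c : I, a * (b * c) = a * b * c by move=> *; rewrite mulgA.
have FIN := @Eth_fin I X s Hs (fun a b : I => a * b) sg opA (@mul1g I) (@mulg1 I).
pose E := Eth (fun a b : I => a * b) sg.
have Ecl : forall i u, E u -> E (sg i u) by move=> i; exact: (proj1 (FIN i)).
have Einj : forall i u v, E u -> E v -> sg i u = sg i v -> u = v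
  by move=> i; exact: (proj2 (FIN i)).
have Epre : forall i v, E v -> exists u, E u /\ sg i u = v
  by move=> i v; exact: (Eth_pre opA (@mul1g I) (@mulg1 I)).
have h4 : forall h, InvR l r h -> forall p q i, h p q = sg i (h p (i * q)).
  by move=> h [_ H4] p q i; rewrite /sg H4 mu1.
have hE : forall h, InvR l r h -> forall p q, E (h p q).
  move=> h Hh p q; exists (fun z => h p (z * q)); split; last by rewrite mul1g.
  by move=> z i /=; rewrite (h4 h Hh p (z * q) i) mulgA.
have key : forall G, Inv2R l r G -> forall j x y z,
    sg z (G j x y z) = sg y (G 1 1 j x).
  move=> G HG j x y z; have [Ha Hb H3] := HG.
  have e1 := h4 _ (H3 j x) y 1 z. rewrite mulg1 in e1.
  have e2 := h4 _ (H3 j x) y 1 y. rewrite mulg1 in e2.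
  have e3 := proj1 (H3 j x) 1 1 y. rewrite !mul1g in e3.
  by rewrite -e1 e2 -e3 (G_diag HG).
split.
  move=> G G' HG HG' H11 j x y z.
  have [_ _ H3] := HG; have [_ _ H3'] := HG'.
  apply: (Einj z); [exact: hE | exact: hE |].
  by rewrite !key // H11.
move=> h Hh; have [H3h H4h] := Hh.
have Ex : forall j x y z, exists t, E t /\ sg z t = sg y (h j x).
  move=> j x y z; apply: Epre; apply: Ecl; exact: hE.
pose G j x y z := proj1_sig (constructive_indefinite_description _ (Ex j x y z)).
have Gs : forall j x y z, E (G j x y z) /\ sg z (G j x y z) = sg y (h j x).
  by move=> j x y z; rewrite /G; case: constructive_indefinite_description.
have uniq : forall j x y z t, E t -> sg z t = sg y (h j x) -> G j x y z = t.
  move=> j x y z t Et Ht; apply: (Einj z) => //; first exact: (proj1 (Gs j x y z)).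
  by rewrite Ht (proj2 (Gs j x y z)).
have G4 : forall j x y z i, G j x y z = sg i (G j x y (i * z)).
  move=> j x y z i; apply: uniq; first by apply: Ecl; exact: (proj1 (Gs _ _ _ _)).
  by rewrite -sgM (proj2 (Gs _ _ _ _)).
exists G; split.
  split.
  - move=> j x y z i; symmetry; apply: uniq; first exact: (proj1 (Gs _ _ _ _)).
    by rewrite (proj2 (Gs _ _ _ _)) -H3h.
  - move=> j x y z i; symmetry; apply: uniq; first exact: (proj1 (Gs _ _ _ _)).
    by rewrite (proj2 (Gs _ _ _ _)) sgM -h4.
  - move=> j x; split.
    + move=> y z i; symmetry; apply: uniq; first exact: (proj1 (Gs _ _ _ _)).
      by rewrite !sgM (proj2 (Gs _ _ _ _)).
    + move=> y z i; rewrite (G4 j x y z i) /sg mu2 //.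
move=> y z; apply: uniq; first exact: hE.
have e1 := h4 _ Hh y 1 z. rewrite mulg1 in e1.
have e2 := h4 _ Hh y 1 y. rewrite mulg1 in e2.
have e3 := H3h 1 1 y. rewrite !mul1g in e3.
by rewrite -e1 e2 -e3.
Qed.

Lemma caseR (I : monoidType) (X : Type) (s : list X) (Hs : forall x, List.In x s)
  (l r nu : I -> X -> X)
  (lM : forall i j v, l (i * j) v = l i (l j v))
  (rM : forall i j v, r (i * j) v = r j (r i v))
  (lr : forall i j v, r j (l i v) = l i (r j v))
  (nu1 : forall i, cancel (r i) (nu i)) (nu2 : forall i, cancel (nu i) (r i)) :
  (forall G G', Inv2R l r G -> Inv2R l r G' ->
     (forall y z, G 1 1 y z = G' 1 1 y z) ->
     forall j x y z, G j x y z = G' j x y z) /\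
  (forall h, InvR l r h -> exists G, Inv2R l r G /\ forall y z, G 1 1 y z = h y z).
Proof.
pose tau i v := nu i (l i v).
have nuM : forall i j v, nu (i * j) v = nu i (nu j v).
  move=> i j v; apply: (can_inj (nu1 (i * j))).
  by rewrite nu2 rM nu2 nu2.
have nul : forall i j v, nu i (l j v) = l j (nu i v).
  move=> i j v; apply: (can_inj (nu1 i)); by rewrite nu2 lr nu2.
have tM : forall i j v, tau (i * j) v = tau i (tau j v).
  by move=> i j v; rewrite /tau nuM lM nul.
pose op := fun a b : I => b * a.
have opA : forall a b c : I, op a (op b c) = op (op a b) c by move=> *; rewrite /op mulgA.
have op1 : forall a, op 1 a = a by move=> a; rewrite /op mulg1.
have opr1 : forall a, op a 1 = a by move=> a; rewrite /op mul1g.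
have FIN := @Eth_fin I X s Hs op tau opA op1 opr1.
pose E := Eth op tau.
have Ecl : forall i u, E u -> E (tau i u) by move=> i; exact: (proj1 (FIN i)).
have Einj : forall i u v, E u -> E v -> tau i u = tau i v -> u = v
  by move=> i; exact: (proj2 (FIN i)).
have Epre : forall i v, E v -> exists u, E u /\ tau i u = v
  by move=> i v; exact: (Eth_pre opA op1 opr1).
have h4 : forall h, InvR l r h -> forall p q i, h p (i * q) = tau i (h p q).
  by move=> h [_ H4] p q i; rewrite /tau -H4 nu1.
have hE : forall h, InvR l r h -> forall p, E (h p 1).
  move=> h Hh p; exists (fun y => h (p * y) 1); split; last by rewrite mulg1.
  move=> y i /=; rewrite /op.
  have e := proj1 Hh (p * y) 1 i. rewrite mul1g in e.
  have e' := h4 _ Hh (p * y * i) 1 i. rewrite mulg1 in e'.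
  by rewrite e e' mulgA.
have G1 : forall G, Inv2R l r G -> forall j x y z, G j x y z = tau z (G j x y 1).
  move=> G [_ _ H3] j x y z; by rewrite -h4 // mulg1.
have key : forall G, Inv2R l r G -> forall j x y,
    tau y (G j x y 1) = G 1 1 j x.
  move=> G HG j x y; have [Ha Hb H3] := HG.
  have e3 := proj1 (H3 j x) 1 1 y. rewrite !mul1g in e3.
  by rewrite -G1 // -e3 (G_diag HG).
split.
  move=> G G' HG HG' H11 j x y z.
  have [_ _ H3] := HG; have [_ _ H3'] := HG'.
  rewrite (G1 G HG) (G1 G' HG'); congr (tau z _).
  apply: (Einj y); [exact: hE | exact: hE |].
  by rewrite !key // H11.
move=> h Hh; have [H3h H4h] := Hh.
have Ex : forall j x y, exists t, E t /\ tau y t = h j x.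
  move=> j x y; apply: Epre.
  rewrite -[x]mulg1 h4 //; apply: Ecl; exact: hE.
pose K j x y := proj1_sig (constructive_indefinite_description _ (Ex j x y)).
have Ks : forall j x y, E (K j x y) /\ tau y (K j x y) = h j x.
  by move=> j x y; rewrite /K; case: constructive_indefinite_description.
have uniq : forall j x y t, E t -> tau y t = h j x -> K j x y = t.
  move=> j x y t Et Ht; apply: (Einj y) => //; first exact: (proj1 (Ks j x y)).
  by rewrite Ht (proj2 (Ks j x y)).
exists (fun j x y z => tau z (K j x y)); split.
  split.
  - move=> j x y z i /=; congr (tau z _); symmetry; apply: uniq; first exact: (proj1 (Ks _ _ _)).
    by rewrite (proj2 (Ks _ _ _)) -H3h.
  - move=> j x y z i /=; congr (tau z _); symmetry; apply: uniq; first exact: (proj1 (Ks _ _ _)).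
    by rewrite tM (proj2 (Ks _ _ _)) h4.
  - move=> j x; split.
    + move=> y z i /=; rewrite tM; congr (tau z _); apply: uniq.
        by apply: Ecl; exact: (proj1 (Ks _ _ _)).
      by rewrite -tM (proj2 (Ks _ _ _)).
    + move=> y z i /=; by rewrite tM /tau nu2.
move=> y z /=; rewrite -[in RHS](mulg1 z) h4 //; congr (tau z _).
apply: uniq; first exact: hE.
have e3 := H3h 1 1 y. rewrite !mul1g in e3.
by rewrite -h4 // mulg1 -e3.
Qed.


Lemma sig_eq (T : Type) (P : T -> Prop) (a b : {x | P x}) :
  proj1_sig a = proj1_sig b -> a = b.
Proof.
case: a b => [a Ha] [b Hb] /= e; subst b; congr exist; exact: proof_irrelevance.
Qed.

Definition raw2 (I : monoidType) (A : iset I) (h : Inv A) y z :=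
  proj1_sig (proj1_sig h y) z.
Definition raw4 (I : monoidType) (A : iset I) (GG : Inv (Inv A)) j x y z :=
  proj1_sig (proj1_sig (proj1_sig (proj1_sig GG j) x) y) z.

Lemma raw2_InvR (I : monoidType) (A : iset I) (h : Inv A) :
  InvR (@actl I A) (@actr I A) (raw2 h).
Proof.
split.
  move=> y z i; have := proj2_sig h i y => /= /(f_equal (fun f => proj1_sig f z)).
  by rewrite /raw2.
move=> y z i; rewrite /raw2; exact: (proj2_sig (proj1_sig h y) i z).
Qed.

Lemma raw4_Inv2R (I : monoidType) (A : iset I) (GG : Inv (Inv A)) :
  Inv2R (@actl I A) (@actr I A) (raw4 GG).
Proof.
split.
- move=> j x y z i; have := proj2_sig GG i j => /= /(f_equal (fun F =>
     proj1_sig (proj1_sig (proj1_sig F x) y) z)).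
  by rewrite /raw4.
- move=> j x y z i; have := proj2_sig (proj1_sig GG j) i x => /= /(f_equal (fun F =>
     proj1_sig (proj1_sig F y) z)).
  by rewrite /raw4 => ->.
- move=> j x; exact: (raw2_InvR (proj1_sig (proj1_sig GG j) x)).
Qed.

Lemma raw2_inj (I : monoidType) (A : iset I) (h h' : Inv A) :
  (forall y z, raw2 h y z = raw2 h' y z) -> h = h'.
Proof.
move=> H; apply: sig_eq; apply: functional_extensionality => y.
apply: sig_eq; apply: functional_extensionality => z; exact: H.
Qed.

Lemma raw4_inj (I : monoidType) (A : iset I) (G G' : Inv (Inv A)) :
  (forall j x y z, raw4 G j x y z = raw4 G' j x y z) -> G = G'.
Proof.
move=> H; apply: sig_eq; apply: functional_extensionality => j.
apply: sig_eq; apply: functional_extensionality => x.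
apply: raw2_inj => y z; exact: H.
Qed.

Lemma pack (I : monoidType) (A : iset I) (G : I -> I -> I -> I -> A) :
  Inv2R (@actl I A) (@actr I A) G ->
  exists GG : Inv (Inv A), forall j x y z, raw4 GG j x y z = G j x y z.
Proof.
move=> [Ha Hb H3].
have L1 : forall j x y, mapr_cond (fun z => G j x y z).
  move=> j x y i z; exact: (proj2 (H3 j x) y z i).
pose f1 j x y : Mapr A := exist _ (fun z => G j x y z) (L1 j x y).
have L2 : forall j x, mapl_cond (f1 j x).
  move=> j x i y; apply: sig_eq; apply: functional_extensionality => z /=.
  exact: (proj1 (H3 j x) y z i).
pose f2 j x : Inv A := exist _ (f1 j x) (L2 j x).
have L3 : forall j, mapr_cond (f2 j).
  move=> j i x; apply: sig_eq; apply: functional_extensionality => y /=.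
  apply: sig_eq; apply: functional_extensionality => z /=.
  by rewrite -Hb.
pose f3 j : Mapr (Inv A) := exist _ (f2 j) (L3 j).
have L4 : mapl_cond f3.
  move=> i j; apply: sig_eq; apply: functional_extensionality => x /=.
  apply: sig_eq; apply: functional_extensionality => y /=.
  apply: sig_eq; apply: functional_extensionality => z /=.
  by rewrite -Ha.
by exists (exist _ f3 L4).
Qed.

Lemma evbar_equiv (I : monoidType) (A : iset I) : equivariant (@evbar I (Inv A)).
Proof.
move=> i GG /=; apply: raw2_inj => y z.
rewrite /raw2 /evbar /= mulg1.
have [Ha Hb _] := raw4_Inv2R GG.
have e1 := Hb i 1 y z i. have e2 := Ha 1 1 (i * y) z i.
rewrite !mulg1 in e1; rewrite !mul1g in e2.
rewrite /raw4 in e1 e2. by rewrite e1 e2.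
Qed.


Lemma comp (I : monoidType) (N : iset I) (s : list N) (Hs : forall x, List.In x s) :
  is_iset N -> one_side_invertible N ->
  (forall G G', Inv2R (@actl I N) (@actr I N) G -> Inv2R (@actl I N) (@actr I N) G' ->
     (forall y z, G 1 1 y z = G' 1 1 y z) ->
     forall j x y z, G j x y z = G' j x y z) /\
  (forall h, InvR (@actl I N) (@actr I N) h ->
     exists G, Inv2R (@actl I N) (@actr I N) G /\ forall y z, G 1 1 y z = h y z).
Proof.
move=> [_ lM _ rM lr] [Hl|Hr].
  have H : forall i, exists g, cancel (@actl I N i) g /\ cancel g (@actl I N i).
    by move=> i; case: (Hl i) => g *; exists g.
  pose mu i := proj1_sig (constructive_indefinite_description _ (H i)).
  have mu1 : forall i, cancel (@actl I N i) (mu i).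
    by move=> i; rewrite /mu; case: constructive_indefinite_description => g [].
  have mu2 : forall i, cancel (mu i) (@actl I N i).
    by move=> i; rewrite /mu; case: constructive_indefinite_description => g [].
  exact: (caseL Hs lM rM lr mu1 mu2).
have H : forall i, exists g, cancel (@actr I N i) g /\ cancel g (@actr I N i).
  by move=> i; case: (Hr i) => g *; exists g.
pose nu i := proj1_sig (constructive_indefinite_description _ (H i)).
have nu1 : forall i, cancel (@actr I N i) (nu i).
  by move=> i; rewrite /nu; case: constructive_indefinite_description => g [].
have nu2 : forall i, cancel (nu i) (@actr I N i).
  by move=> i; rewrite /nu; case: constructive_indefinite_description => g [].
exact: (caseR Hs lM rM lr nu1 nu2).
Qed.

Lemma comp_fin (K : Type) (F : K -> Type) (m : forall k, F k)
  (s : list (forall k, F k)) (Hs : forall x, List.In x s) k :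
  exists s' : list (F k), forall v, List.In v s'.
Proof.
exists (List.map (fun x => x k) s) => v.
pose emb := fun k' => match excluded_middle_informative (k = k') with
  | left e => eq_rect k F v k' e | right _ => m k' end.
have -> : v = emb k.
  rewrite /emb; case: excluded_middle_informative => // e.
  by rewrite (proof_irrelevance _ e erefl).
apply: List.in_map; exact: Hs.
Qed.

Lemma prod_InvR (I : monoidType) (K : Type) (Nf : K -> iset I) h :
  InvR (@actl I (prod_iset Nf)) (@actr I (prod_iset Nf)) h ->
  forall k, InvR (@actl I (Nf k)) (@actr I (Nf k)) (fun y z => h y z k).
Proof.
move=> [H3 H4] k; split=> y z i.
  exact: (f_equal (fun v => v k) (H3 y z i)).
exact: (f_equal (fun v => v k) (H4 y z i)).
Qed.

Lemma prod_Inv2R (I : monoidType) (K : Type) (Nf : K -> iset I) G :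
  Inv2R (@actl I (prod_iset Nf)) (@actr I (prod_iset Nf)) G ->
  forall k, Inv2R (@actl I (Nf k)) (@actr I (Nf k)) (fun j x y z => G j x y z k).
Proof.
move=> [Ha Hb H3] k; split.
- move=> j x y z i; exact: (f_equal (fun v => v k) (Ha j x y z i)).
- move=> j x y z i; exact: (f_equal (fun v => v k) (Hb j x y z i)).
- move=> j x; exact: (prod_InvR (H3 j x)).
Qed.

Lemma Inv2R_prod (I : monoidType) (K : Type) (Nf : K -> iset I)
  (G : I -> I -> I -> I -> prod_iset Nf) :
  (forall k, Inv2R (@actl I (Nf k)) (@actr I (Nf k)) (fun j x y z => G j x y z k)) ->
  Inv2R (@actl I (prod_iset Nf)) (@actr I (prod_iset Nf)) G.
Proof.
move=> H; split.
- move=> j x y z i; apply: functional_extensionality_dep => k.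
  by have [Ha _ _] := H k; exact: Ha.
- move=> j x y z i; apply: functional_extensionality_dep => k.
  by have [_ Hb _] := H k; exact: Hb.
- move=> j x; split=> y z i; apply: functional_extensionality_dep => k;
    have [_ _ H3] := H k; [exact: (proj1 (H3 j x)) | exact: (proj2 (H3 j x))].
Qed.

Lemma part1 (I : monoidType) (M : iset I) : bAct M -> iset_iso (@evbar I (Inv M)).
Proof.
move=> [isM [s Hs] [K [Nf [HN eM]]]]; subst M.
have Inj : forall G G' : Inv (Inv (prod_iset Nf)), evbar G = evbar G' -> G = G'.
  move=> G G' e; apply: raw4_inj => j x y z.
  apply: functional_extensionality_dep => k.
  have [s' Hs'] := comp_fin (raw4 G 1 1 1 1) Hs k.
  have [CI _] := comp Hs' (proj1 (HN k)) (proj2 (HN k)).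
  apply: (CI (fun j x y z => raw4 G j x y z k) (fun j x y z => raw4 G' j x y z k)).
  - exact: (prod_Inv2R (raw4_Inv2R G)).
  - exact: (prod_Inv2R (raw4_Inv2R G')).
  - move=> y' z'; exact (f_equal (fun h : Inv (prod_iset Nf) => (raw2 h y' z' : forall k, Nf k) k) e).
have Surj : forall h : Inv (prod_iset Nf), exists GG, evbar GG = h.
  move=> h.
  have H : forall k, exists Gk : I -> I -> I -> I -> Nf k,
      Inv2R (@actl I (Nf k)) (@actr I (Nf k)) Gk /\
      forall y z, Gk 1 1 y z = raw2 h y z k.
    move=> k; have [s' Hs'] := comp_fin (raw2 h 1 1) Hs k.
    have [_ CS] := comp Hs' (proj1 (HN k)) (proj2 (HN k)).
    exact: (CS _ (prod_InvR (raw2_InvR h) k)).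
  pose Gf k := proj1_sig (constructive_indefinite_description _ (H k)).
  have Gfs : forall k, Inv2R (@actl I (Nf k)) (@actr I (Nf k)) (Gf k) /\
      forall y z, Gf k 1 1 y z = raw2 h y z k.
    by move=> k; rewrite /Gf; case: constructive_indefinite_description.
  pose G j x y z := (fun k => Gf k j x y z) : prod_iset Nf.
  have HG : Inv2R (@actl I (prod_iset Nf)) (@actr I (prod_iset Nf)) G.
    apply: Inv2R_prod => k; exact: (proj1 (Gfs k)).
  have [GG HGG] := pack HG.
  exists GG; apply: raw2_inj => y z.
  rewrite [LHS](HGG 1 1 y z); apply: functional_extensionality_dep => k.
  exact: (proj2 (Gfs k)).
split; first exact: evbar_equiv.
pose g h := proj1_sig (constructive_indefinite_description _ (Surj h)).
have gs : forall h, evbar (g h) = h.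
  by move=> h; rewrite /g; case: constructive_indefinite_description.
exists g; split.
- move=> i h /=; apply: Inj.
  have E1 := evbar_equiv i (g h). have E2 := evbar_equiv i (g (actr i h)).
  rewrite /= in E1 E2.
  rewrite -E1 gs; apply: sig_eq => /=; by rewrite gs.
- move=> GG; apply: Inj; exact: gs.
- exact: gs.
Qed.


Theorem mainTheorem13 (I : monoidType) :
  (forall M : iset I, bAct M -> iset_iso (@evbar I (Inv M))) /\
  (forall (M N : iset I) (u : M -> N),
     bAct M -> bAct N -> equivariant u ->
     forall (F : Inv (Inv M)) (G : Inv (Inv N)),
       (forall a b c d,
          proj1_sig (proj1_sig (proj1_sig (proj1_sig G a) b) c) d =
          u (proj1_sig (proj1_sig (proj1_sig (proj1_sig F a) b) c) d)) ->
       forall c d,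
         proj1_sig (proj1_sig (evbar G) c) d =
         u (proj1_sig (proj1_sig (evbar F) c) d)).
Proof.
split; first exact: part1.
move=> M N u _ _ _ F G H c d; exact: H.
Qed.
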